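(* Let $n\ge1$ be an integer and $\alpha<0$. Then the polynomial $\mathcal{R}_n(w)=w^2R_n'(w)+\alpha R_n(w)$ has exactly one positive root. Its coefficients are $$\mathcal{R}_n(w)=\sum_{k=0}^{n+1}b_{k,n}w^k,\qquad b_{k,n}=\frac{(n+k-1)!}{(n-k+1)!\,k!}\bigl(k(k-1)+\alpha(n+k)(n-k+1)\bigr),$$ for $1\le k\le n+1$, with $b_{0,n}=\alpha$.
   Context: $R_n(w)=\sum_{m=0}^n\frac{(n+m)!}{m!\,(n-m)!}w^m$. *)

(* Defs.v *)
(* real numbers modelled by an arbitrary real closed field. *)
From HB Require Import structures.
From mathcomp Require Import all_boot all_order all_algebra.
Set Implicit Arguments. Unset Strict Implicit. Unset Printing Implicit Defensive.
Import Order.TTheory GRing.Theory Num.Theory.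
Local Open Scope ring_scope.

Definition Rpoly (R : rcfType) (n : nat) : {poly R} :=
  \sum_(m < n.+1) (((n + m)`!)%:R / ((m`!)%:R * ((n - m)`!)%:R)) *: 'X^m.

Definition calR (R : rcfType) (n : nat) (a : R) : {poly R} :=
  'X^2 * (Rpoly R n)^`() + a *: Rpoly R n.

Definition bcoef (R : rcfType) (n : nat) (a : R) (k : nat) : R :=
  if k == 0%N then a
  else (((n + k).-1)`!)%:R / ((((n.+1 - k)`!)%:R) * ((k`!)%:R))
       * ((k * k.-1)%:R + a * ((n + k) * (n.+1 - k))%:R).

(* Main.v *)
Require Import Defs.
From HB Require Import structures.
From mathcomp Require Import all_boot all_order all_algebra.
From mathcomp Require Import polyrcf ring lra zify.
Import Order.TTheory GRing.Theory Num.Theory.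
Local Open Scope ring_scope.

Lemma coefRp (R : rcfType) n m : (Rpoly R n)`_m =
  if (m < n.+1)%N then ((n + m)`!)%:R / ((m`!)%:R * ((n - m)`!)%:R) else 0.
Proof.
rewrite /Rpoly. set E := (fun m : nat => ((n + m)`!)%:R / ((m`!)%:R * ((n - m)`!)%:R) : R).
by rewrite (_ : \sum_(m < n.+1) _ = \poly_(m < n.+1) E m) ?coef_poly // poly_def.
Qed.

Lemma fnz (R : rcfType) k : (k`!)%:R != 0 :> R.
Proof. by rewrite pnatr_eq0 -lt0n fact_gt0. Qed.

Lemma part2 (R : rcfType) (n : nat) (a : R) :
  calR n a = \poly_(k < n.+2) bcoef n a k.
Proof.
apply/polyP => i; rewrite coef_poly /calR coefD coefZ coefXnM coef_deriv.
case: i => [|k].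
  rewrite /= coefRp /bcoef /= addn0 mul1r subn0 divff ?fnz //; by rewrite add0r mulr1.
have -> : (if (k.+1 < 2)%N then 0 else (Rpoly R n)`_(k.+1 - 2).+1 *+ (k.+1 - 2).+1)
   = (Rpoly R n)`_k *+ k.
  by case: k => [|k] //=; rewrite ?mulr0n ?subSS ?subn0.
rewrite !coefRp.
case: (leqP k n) => hk; last first.
  rewrite !ifF ?mul0rn ?mulr0 ?addr0 //; lia.
rewrite (ifT _ _ (_ : (k.+1 < n.+2)%N)) //.
move: hk => /subnK <-; set d := (n - k)%N.
rewrite /bcoef /=.
case: d => [|e].
  rewrite (ifT _ _ (_ : (k < (0+k).+1)%N)); last lia.
  rewrite (ifF _ _ (_ : (k.+1 < (0+k).+1)%N = false)); last lia.
  rewrite (_ : (0 + k + k = k + k)%N); last lia.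
  rewrite (_ : (0 + k - k = 0)%N); last lia.
  rewrite (_ : ((0 + k + k.+1).-1 = k + k)%N); last lia.
  rewrite (_ : ((0 + k).+1 - k.+1 = 0)%N); last lia.
  rewrite muln0 mulr0 addr0 factS fact0 !natrM.
  rewrite addr0 -mulr_natr; field. by rewrite fnz /= addrC natr1 pnatr_eq0.
rewrite (ifT _ _ (_ : (k < (e.+1+k).+1)%N)); last lia.
rewrite (ifT _ _ (_ : (k.+1 < (e.+1+k).+1)%N)); last lia.
rewrite (_ : (e.+1 + k + k = (e+k+k).+1)%N); last lia.
rewrite (_ : (e.+1 + k - k = e.+1)%N); last lia.
rewrite (_ : (e.+1 + k + k.+1 = (e+k+k).+2)%N); last lia.
rewrite (_ : (e.+1 + k - k.+1 = e)%N); last lia.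
rewrite (_ : ((e.+1 + k).+1 - k.+1 = e.+1)%N); last lia.
rewrite /= !factS !natrM -mulr_natr.
field.
by rewrite !fnz /= !(addrC 1) !natr1 !pnatr_eq0.
Qed.

Lemma powle (R : rcfType) (x y : R) m : 0 <= x -> x <= y -> x ^+ m <= y ^+ m.
Proof. by move=> x0 xy; apply: lerXn2r; rewrite // nnegrE (le_trans x0 xy). Qed.

Lemma termle (R : rcfType) (b : nat -> R) (j k : nat) (x y : R) :
  (forall k, (k < j)%N -> b k <= 0) ->
  (forall k, (j <= k)%N -> 0 <= b k) -> 0 < x -> x < y ->
  b k * x ^+ k * y ^+ j <= b k * y ^+ k * x ^+ j.
Proof.
move=> bneg bpos x0 xy.
have y0 : 0 < y by apply: lt_trans xy.
case: (ltnP k j) => hk.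
  have [d ->] : exists d, j = (d + k)%N by exists (j-k)%N; rewrite subnK // ltnW.
  have bk := bneg _ hk.
  have := @powle R x y d (ltW x0) (ltW xy).
  have := exprn_ge0 k (ltW x0); have := exprn_ge0 k (ltW y0).
  have := exprn_ge0 d (ltW x0).
  rewrite !exprD.
  set X := x ^+ k; set Y := y ^+ k; set U := x ^+ d; set V := y ^+ d.
  move=> *. rewrite -!mulrA; apply: ler_wnM2l => //. have : 0 <= X * Y by apply: mulr_ge0. nra.
have bk := bpos _ hk.
have [d kE] : exists d, k = (d + j)%N by exists (k-j)%N; rewrite subnK.
rewrite kE in bk *.
have := @powle R x y d (ltW x0) (ltW xy).
have := exprn_ge0 j (ltW x0); have := exprn_ge0 j (ltW y0).
have := exprn_ge0 d (ltW x0).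
rewrite !exprD.
set X := x ^+ j; set Y := y ^+ j; set U := x ^+ d; set V := y ^+ d.
move=> *. rewrite -!mulrA; apply: ler_wpM2l => //. have : 0 <= X * Y by apply: mulr_ge0. nra.
Qed.

Lemma key (R : rcfType) (b : nat -> R) (N j : nat) (x y : R) :
  (0 < j)%N -> b 0%N < 0 -> (forall k, (k < j)%N -> b k <= 0) ->
  (forall k, (j <= k)%N -> 0 <= b k) -> 0 < x -> x < y ->
  (\poly_(k < N.+1) b k).[x] * y ^+ j < (\poly_(k < N.+1) b k).[y] * x ^+ j.
Proof.
move=> j0 b0 bneg bpos x0 xy.
rewrite !horner_poly !mulr_suml !big_ord_recl /=.
apply: ltr_leD.
  rewrite !expr0 !mulr1 ltr_nM2l //.
  by have := ltrXn2r j (ltW x0) xy; rewrite -lt0n j0.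
by apply: ler_sum => i _; apply: termle.
Qed.

Lemma Ppos (R : rcfType) (n k : nat) :
  0 < (((n + k).-1)`!)%:R / ((((n.+1 - k)`!)%:R) * ((k`!)%:R)) :> R.
Proof. by rewrite divr_gt0 ?mulr_gt0 ?ltr0n ?fact_gt0. Qed.

Lemma bmono (R : rcfType) (n : nat) (a : R) k l :
  (1 <= k)%N -> (k <= l)%N -> (l <= n.+1)%N -> a < 0 ->
  0 <= bcoef n a k -> 0 <= bcoef n a l.
Proof.
move=> k1 kl ln a0; rewrite /bcoef.
rewrite (ifF _ _ (_ : (k == 0)%N = false)); last lia.
rewrite (ifF _ _ (_ : (l == 0)%N = false)); last lia.
rewrite !pmulr_rge0 ?Ppos // => hk.
apply: le_trans hk _; apply: lerD; first by rewrite ler_nat; nia.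
apply: ler_wnM2l; first exact: ltW.
rewrite ler_nat; nia.
Qed.

Lemma blast (R : rcfType) (n : nat) (a : R) : (1 <= n)%N -> 0 < bcoef n a n.+1.
Proof.
move=> n1; rewrite /bcoef /= pmulr_rgt0 ?Ppos // subnn muln0 mulr0 addr0 ltr0n.
nia.
Qed.

Theorem mainTheorem4 (R : rcfType) (n : nat) (a : R) :
  (1 <= n)%N -> a < 0 ->
  (exists! w : R, 0 < w /\ root (calR n a) w) /\
  calR n a = \sum_(k < n.+2) bcoef n a k *: 'X^k.
Proof.
move=> n1 a0; have E := @part2 R n a.
split; last by rewrite E poly_def.
rewrite E; set b := bcoef n a.
have b0 : b 0%N < 0 by [].
have hex : exists k, 0 <= b k := ex_intro _ n.+1 (ltW (@blast R n a n1)).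
case: (ex_minnP hex) => j hj hmin.
have j0 : (0 < j)%N.
  by rewrite lt0n; apply/negP => /eqP jz; move: hj; rewrite jz leNgt b0.
have jle : (j <= n.+1)%N by apply: hmin; exact: ltW (@blast R n a n1).
have bneg : forall k, (k < j)%N -> b k <= 0.
  move=> k hk; have [h|h] := leP 0 (b k); last exact: ltW.
  by have := hmin _ h; rewrite leqNgt hk.
have bpos : forall k, (j <= k)%N -> 0 <= b k.
  move=> k hk; case: (leqP k n.+1) => hkn.
    by apply: (@bmono R n a j k) => //; rewrite -lt0n.
  rewrite /b /bcoef (ifF _ _ (_ : (k == 0)%N = false)); last lia.
  rewrite pmulr_rge0 ?Ppos // (_ : (n.+1 - k = 0)%N); last lia.
  by rewrite muln0 mulr0 addr0 ler0n.
set p := \poly_(k < n.+2) b k.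
have p0 : p.[0] = b 0%N by rewrite horner_coef0 coef_poly.
have uniq : forall x y, 0 < x -> root p x -> 0 < y -> root p y -> x = y.
  move=> x y x0 rx y0 ry; case: (ltgtP x y) => // hxy.
    have := @key R b n.+1 j _ _ j0 b0 bneg bpos x0 hxy.
    by rewrite -/p (rootP rx) (rootP ry) !mul0r ltxx.
  have := @key R b n.+1 j _ _ j0 b0 bneg bpos y0 hxy.
  by rewrite -/p (rootP rx) (rootP ry) !mul0r ltxx.
have lc : lead_coef p = b n.+1 by rewrite lead_coef_poly // gt_eqF // (@blast R n a n1).
have lcpos : 0 < lead_coef p by rewrite lc (@blast R n a n1).
have [N0 HN] := poly_pinfty_gt_lc lcpos.
set y := Num.max N0 1.
have y1 : 1 <= y by rewrite le_max lexx orbT.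
have py : 0 < p.[y] by apply: lt_le_trans lcpos (HN _ _); rewrite le_max lexx.
have pn0 : p.[0] < 0 by rewrite p0.
have hh : p.[0] <= 0 <= p.[y] by rewrite (ltW pn0) (ltW py).
have [w win rw] := @poly_ivt R p 0 y (le_trans ler01 y1) hh.
have w0 : 0 < w.
  move: win => /andP[w0 _]; rewrite lt_neqAle w0 andbT.
  by apply/eqP => wz; move: rw; rewrite -wz /root (lt_eqF pn0).
exists w; split; first by split.
by move=> z [z0 rz]; apply: uniq.
Qed.
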